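(* Let $\mathcal{X}$ be a set, $\mathcal{Y}$ a finite set of labels, $n\ge1$, $\mathcal{F}$ a nonempty class of functions $\mathcal{X}\to\mathcal{Y}$, and let $T$ be the training procedure $T(\mathbf{x},\mathbf{y})=\arg\min_{f\in\mathcal{F}}\sum_{i=1}^n\mathbbm{1}_{f(x_i)\ne y_i}$ (any minimizer). Let $\mathcal{D}_{\mathrm{train}}$ be any distribution over $(\mathcal{X}\times\mathcal{Y})^n$ and $\eta>0$. Define $\mathsf{Train}=\Pr[f(x_i)=y_i]$ where $(\mathbf{x},\mathbf{y})\sim\mathcal{D}_{\mathrm{train}}$, $f=T(\mathbf{x},\mathbf{y})$ and $i$ is uniform on $\{1,\ldots,n\}$; and $\mathsf{Train}(\eta)=\Pr[\tilde f(x_i)=y_i]$ where $(\mathbf{x},\mathbf{y})\sim\mathcal{D}_{\mathrm{train}}$, each $\tilde y_i$ independently equals $y_i$ with probability $1-\eta$ and is uniform on $\mathcal{Y}$ otherwise, $\tilde f=T(\mathbf{x},\tilde{\mathbf{y}})$, and $i$ is uniform on $\{1,\ldots,n\}$. Then the robustness gap satisfies $$\big(\mathsf{Train}-\mathsf{Train}(\eta)\big)_+\le 2\eta.$$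
   Context: $x_+=\max(x,0)$. Accuracies are measured with respect to the original (uncorrupted) labels $y_i$. *)

(* Defs.v *)
From HB Require Import structures.
From mathcomp Require Import all_boot all_order all_algebra.
From mathcomp Require Import all_classical all_reals all_analysis.
Set Implicit Arguments. Unset Strict Implicit. Unset Printing Implicit Defensive.
Import Order.TTheory GRing.Theory Num.Theory.
Local Open Scope ring_scope.
Local Open Scope classical_set_scope.

Section Defs.
Variables (R : realType) (X : Type) (Y : finType) (n : nat).

Definition n_err (f : X -> Y) (x : 'I_n -> X) (y : 'I_n -> Y) : nat :=
  #|[set i : 'I_n | f (x i) != y i]|.

Definition is_ERM (F : set (X -> Y)) (T : ('I_n -> X) -> ('I_n -> Y) -> X -> Y) :=
  forall x y, F (T x y) /\ forall g, F g -> (n_err (T x y) x y <= n_err g x y)%N.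

Definition acc (f : X -> Y) (x : 'I_n -> X) (y : 'I_n -> Y) : R :=
  n%:R^-1 * \sum_(i < n) (f (x i) == y i)%:R.

(* law of the corrupted labels: independently, ytil_i = y_i w.p. 1-eta,
   uniform on Y w.p. eta *)
Definition noise_pmf (eta : R) (y : 'I_n -> Y) (yt : {ffun 'I_n -> Y}) : R :=
  \prod_(i < n) ((1 - eta) * (yt i == y i)%:R + eta / #|Y|%:R).

Definition xs (s : 'I_n -> X * Y) : 'I_n -> X := fun i => (s i).1.
Definition ys (s : 'I_n -> X * Y) : 'I_n -> Y := fun i => (s i).2.

Definition train_cond (T : ('I_n -> X) -> ('I_n -> Y) -> X -> Y)
  (s : 'I_n -> X * Y) : R :=
  acc (T (xs s) (ys s)) (xs s) (ys s).

(* conditional (on the sample s) accuracy, w.r.t. the ORIGINAL labels,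
   of the model trained on corrupted labels, averaged over the noise *)
Definition train_eta_cond (eta : R) (T : ('I_n -> X) -> ('I_n -> Y) -> X -> Y)
  (s : 'I_n -> X * Y) : R :=
  \sum_(yt : {ffun 'I_n -> Y})
     noise_pmf eta (ys s) yt * acc (T (xs s) yt) (xs s) (ys s).

End Defs.

(* Train and Train(eta): the sample is drawn as S w, w ~ P *)
Definition Train (R : realType) (X : Type) (Y : finType) (n : nat)
  (d : measure_display) (Omega : measurableType d) (P : probability Omega R)
  (S : Omega -> 'I_n -> X * Y) (T : ('I_n -> X) -> ('I_n -> Y) -> X -> Y)
  : \bar R :=
  (\int[P]_w (train_cond R T (S w))%:E)%E.

Definition Train_eta (R : realType) (X : Type) (Y : finType) (n : nat)
  (d : measure_display) (Omega : measurableType d) (P : probability Omega R)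
  (S : Omega -> 'I_n -> X * Y) (T : ('I_n -> X) -> ('I_n -> Y) -> X -> Y)
  (eta : R) : \bar R :=
  (\int[P]_w (train_eta_cond eta T (S w))%:E)%E.

(* Main.v *)
Require Import Defs.
From HB Require Import structures.
From mathcomp Require Import all_boot all_order all_algebra.
From mathcomp Require Import all_classical all_reals all_analysis.
From mathcomp Require Import ring lra.
Import Order.TTheory GRing.Theory Num.Theory.
Local Open Scope ring_scope.
Local Open Scope classical_set_scope.
Section Pt.
Variables (R : realType) (X : Type) (Y : finType) (n : nat).

Definition errR (g : X -> Y) (x : 'I_n -> X) (z : 'I_n -> Y) : R :=
  \sum_(i < n) (g (x i) != z i)%:R.

Lemma nerrR g x z : (n_err g x z)%:R = errR g x z.
Proof.
rewrite /n_err (@eq_card _ _ [pred i | g (x i) != z i]); last first.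
  by move=> i; apply/idP/idP => [/set_mem|H] //; apply: mem_set.
rewrite -sum1_card natr_sum big_mkcond /errR /=.
by apply eq_bigr => i _; rewrite inE; case: ifP.
Qed.

Lemma accE g x z : acc R g x z = n%:R^-1 * (n%:R - errR g x z).
Proof.
rewrite /acc /errR; congr (_ * _).
have -> : n%:R = \sum_(i < n) (1 : R) by rewrite sumr_const card_ord.
rewrite -sumrB; apply eq_bigr => i _.
case: (g (x i) == z i) => /=; by rewrite ?subr0 ?subrr.
Qed.

Definition distR (yt z : 'I_n -> Y) : R := \sum_(i < n) (yt i != z i)%:R.

Lemma err_tri g x a b : errR g x a <= errR g x b + distR b a.
Proof.
rewrite /errR /distR -big_split /=; apply ler_sum => i _.
case: (eqVneq (g (x i)) (a i)) => [E1|H1] /=.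
  by rewrite addr_ge0.
case: (eqVneq (g (x i)) (b i)) => [E|H2] /=.
  by rewrite -E H1 add0r.
by rewrite lerDl ler0n.
Qed.

Lemma distC a b : distR a b = distR b a.
Proof. by apply eq_bigr => i _; rewrite eq_sym. Qed.

Lemma gap_one (F : set (X -> Y)) T x y (yt : 'I_n -> Y) :
  (0 < n)%N -> is_ERM F T ->
  acc R (T x y) x y - acc R (T x yt) x y <= 2 * n%:R^-1 * distR yt y.
Proof.
move=> n0 HE.
have [Fy _] := HE x y.
have [_ Hm] := HE x yt.
have := Hm _ Fy; rewrite -(ler_nat R) !nerrR => H.
have h1 := err_tri (T x yt) x y yt.
have h2 := err_tri (T x y) x yt y.
rewrite !accE (distC y yt) in h2 *.
have nR : 0 < n%:R :> R by rewrite ltr0n.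
have ki : 0 < n%:R^-1 :> R by rewrite invr_gt0.
move: (n%:R^-1) ki => k ki.
nra.
Qed.

Section Noise.
Variables (eta : R) (y : 'I_n -> Y).
Hypotheses (e0 : 0 < eta) (e1 : eta <= 1) (Y0 : (0 < #|Y|)%N).

Let Fn i (j : Y) : R := (1 - eta) * (j == y i)%:R + eta / #|Y|%:R.

Lemma Fn_ge0 i j : 0 <= Fn i j.
Proof.

have h1 : 0 <= 1 - eta by rewrite subr_ge0.
have h2 : 0 <= eta by apply: ltW.
rewrite /Fn addr_ge0 //; first by rewrite mulr_ge0.
by rewrite divr_ge0.
Qed.

Lemma sumFn i : \sum_j Fn i j = 1.
Proof.
rewrite /Fn big_split /= -mulr_sumr (bigD1 (y i)) //= eqxx big1; last first.
  by move=> j /negbTE ->.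
rewrite sumr_const addr0.
have YR : #|Y|%:R != 0 :> R by rewrite pnatr_eq0 -lt0n.
rewrite -[_ *+ _]mulr_natr (_ : #|_| = #|Y|) ?mulfVK // ?mulr1.
rewrite -(mulr_natr (eta / _)); field.
by rewrite pnatr_eq0 -lt0n.
Qed.

Lemma pmf_ge0 yt : 0 <= noise_pmf eta y yt.
Proof. by apply: prodr_ge0 => i _; apply: Fn_ge0. Qed.

Lemma pmf_sum : \sum_(yt : {ffun 'I_n -> Y}) noise_pmf eta y yt = 1.
Proof.
transitivity (\sum_(yt : {ffun 'I_n -> Y}) \prod_i Fn i (yt i)); first by [].
rewrite -bigA_distr_bigA /=; apply: big1 => i _; exact: sumFn.
Qed.

Lemma marg i0 :
  \sum_(yt : {ffun 'I_n -> Y}) noise_pmf eta y yt * (yt i0 != y i0)%:R <= eta.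
Proof.
pose G i j := Fn i j * (if i == i0 then (j != y i0)%:R else 1).
have -> : \sum_(yt : {ffun 'I_n -> Y}) noise_pmf eta y yt * (yt i0 != y i0)%:R
   = \sum_(yt : {ffun 'I_n -> Y}) \prod_i G i (yt i).
  apply: eq_bigr => yt _.
  rewrite /G big_split /= [X in _ = _ * X](bigD1 i0) //= eqxx [X in _ = _ * (_ * X)]big1
     ?mulr1 //; by move=> i /negbTE ->.
rewrite -bigA_distr_bigA /= (bigD1 i0) //= [X in _ * X]big1 ?mulr1; last first.
  move=> i /negbTE Hi; rewrite /G Hi; under eq_bigr do rewrite mulr1.
  exact: sumFn.
have -> : eta = \sum_(j : Y) eta / #|Y|%:R.
  rewrite sumr_const -(mulr_natr (eta / _)); field.
  by rewrite pnatr_eq0 -lt0n.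
apply: ler_sum => j _; rewrite /G eqxx /Fn.
case: (j == y i0) => /=.
  by rewrite mulr0 divr_ge0 ?ler0n //; apply: ltW.
by rewrite mulr0 add0r mulr1.
Qed.

Lemma acc_ge0 (g : X -> Y) (x : 'I_n -> X) (z : 'I_n -> Y) : 0 <= acc R g x z.
Proof. by rewrite /acc mulr_ge0 ?invr_ge0 ?ler0n ?sumr_ge0. Qed.

Lemma acc_le1 (g : X -> Y) (x : 'I_n -> X) (z : 'I_n -> Y) : acc R g x z <= 1.
Proof.
rewrite accE; have e0' : 0 <= errR g x z by rewrite sumr_ge0.
case: n => [|m]; first by rewrite invr0 mul0r.
have nR : 0 < m.+1%:R :> R by rewrite ltr0n.
rewrite ler_pdivrMl // mulr1; lra.
Qed.

Lemma pt_bound (F : set (X -> Y)) T x :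
  (0 < n)%N -> is_ERM F T ->
  acc R (T x y) x y - \sum_(yt : {ffun 'I_n -> Y}) noise_pmf eta y yt * acc R (T x yt) x y
  <= 2 * eta.
Proof.
move=> n0 HE.
rewrite -[X in X - _]mul1r.
have -> : (1 : R) * acc R (T x y) x y
   = \sum_(yt : {ffun 'I_n -> Y}) noise_pmf eta y yt * acc R (T x y) x y.
  by rewrite -mulr_suml pmf_sum.
rewrite -sumrB.
under eq_bigr do rewrite -mulrBr.
apply: (@le_trans _ _ (\sum_(yt : {ffun 'I_n -> Y}) noise_pmf eta y yt * (2 * n%:R^-1 * distR yt y))).
  apply: ler_sum => yt _; apply: ler_wpM2l; first exact: pmf_ge0.
  exact: gap_one.
under eq_bigr do rewrite mulrCA.
rewrite -mulr_sumr.
have -> : \sum_(yt : {ffun 'I_n -> Y}) noise_pmf eta y yt * distR yt y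
    = \sum_(i < n) \sum_(yt : {ffun 'I_n -> Y}) noise_pmf eta y yt * (yt i != y i)%:R.
  rewrite exchange_big /=; apply: eq_bigr => yt _; by rewrite /distR mulr_sumr.
have nR : 0 < n%:R :> R by rewrite ltr0n.
apply: (@le_trans _ _ (2 * n%:R^-1 * \sum_(i < n) eta)).
  rewrite ler_wpM2l ?mulr_ge0 ?invr_ge0 ?ler0n //.
  by apply: ler_sum => i _; apply: marg.
rewrite sumr_const card_ord -(mulr_natr eta) ?mul1r.
have -> : 2 * n%:R^-1 * (eta * n%:R) = 2 * eta.
  by field; rewrite gt_eqF.
done.
Qed.

Lemma teta_ge0 T x : 0 <= \sum_(yt : {ffun 'I_n -> Y}) noise_pmf eta y yt * acc R (T x yt : X -> Y) x y.
Proof. by apply: sumr_ge0 => yt _; rewrite mulr_ge0 ?pmf_ge0 ?acc_ge0. Qed.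

End Noise.
End Pt.

Theorem lemmaD2 (R : realType) (X : Type) (Y : finType) (n : nat)
  (F : set (X -> Y)) (T : ('I_n -> X) -> ('I_n -> Y) -> X -> Y)
  (d : measure_display) (Omega : measurableType d) (P : probability Omega R)
  (S : Omega -> 'I_n -> X * Y) (eta : R) :
  (1 <= n)%N -> F !=set0 -> is_ERM F T ->
  0 < eta -> eta <= 1 ->
  measurable_fun setT (fun w => train_cond R T (S w)) ->
  measurable_fun setT (fun w => train_eta_cond eta T (S w)) ->
  (Order.max (Train P S T - Train_eta P S T eta) 0 <= (2 * eta)%:E)%E.
Proof.
move=> n0 _ HE e0 e1 mf mg.
have e2 : 0 <= 2 * eta by rewrite mulr_ge0 // ltW.
have hb w : train_cond R T (S w) <= train_eta_cond eta T (S w) + 2 * eta.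
  have Y0 : (0 < #|Y|)%N.
    by apply/card_gt0P; exists (ys (S w) (Ordinal n0)).
  have := @pt_bound R X Y n eta (ys (S w)) e0 e1 Y0 F T (xs (S w)) n0 HE.
  rewrite /train_cond /train_eta_cond; lra.
have f0 w : 0 <= train_cond R T (S w) by apply: acc_ge0.
have g0 w : 0 <= train_eta_cond eta T (S w).
  by apply: sumr_ge0 => yt _; rewrite mulr_ge0 ?acc_ge0 // prodr_ge0 // => i _;
    rewrite addr_ge0 ?mulr_ge0 ?divr_ge0 ?ler0n ?subr_ge0 // ltW.
have mfE := proj2 (measurable_realfun.measurable_EFinP setT (fun w => train_cond R T (S w))) mf.
have mgE := proj2 (measurable_realfun.measurable_EFinP setT (fun w => train_eta_cond eta T (S w))) mg.
rewrite ge_max lee_fin e2 andbT /Train /Train_eta lee_subel_addl //.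
have -> : ((\int[P]_w (train_eta_cond eta T (S w))%:E) + (2 * eta)%:E
   = \int[P]_w ((train_eta_cond eta T (S w))%:E + (2 * eta)%:E))%E.
  rewrite ge0_integralD //.
  - rewrite integral_cst //; congr (_ + _)%E; rewrite -[LHS]mule1; congr (_ * _)%E; symmetry; exact: probability_setT.
  all: try (by move=> w _; rewrite lee_fin).
  all: try exact: mgE.
  all: try (exact: measurable_cst).

have H := @ge0_le_integral _ _ _ P setT measurableT
  (fun w => (train_cond R T (S w))%:E)
  (fun w => ((train_eta_cond eta T (S w))%:E + (2 * eta)%:E)%E).
apply: H.
- by move=> w _; rewrite lee_fin.
- exact: mfE.
- by apply: emeasurable_funD => //; exact: mgE.
- by move=> w _; rewrite -EFinD lee_fin.
Qed.
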